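(* Let $n$ be odd and let $g_0,g_1,g_2,g_3:\mathbb{V}_n\to\mathbb{F}_2$ be semi-bent functions with $g_0\oplus g_1\oplus g_2\oplus g_3=0$. Then $g_0g_1\oplus g_0g_2\oplus g_1g_2$ is semi-bent if and only if for every $u\in\mathbb{V}_n$: $\mathcal{W}_{g_i}(u)=0$ for an even number of indices $i\in\{0,1,2,3\}$, and if $\mathcal{W}_{g_i}(u)\neq0$ for all $i\in\{0,1,2,3\}$, then either $\mathcal{W}_{g_0}(u)\mathcal{W}_{g_1}(u)=\mathcal{W}_{g_2}(u)\mathcal{W}_{g_3}(u)$, or the number of $i$ with $\mathcal{W}_{g_i}(u)=2^{(n+1)/2}$ is $1$ or $3$ but it is not the case that $\mathcal{W}_{g_0}(u)=\mathcal{W}_{g_1}(u)=\mathcal{W}_{g_2}(u)$.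
   Context: $\mathbb{V}_n$ is an $n$-dimensional $\mathbb{F}_2$-vector space with inner product $u\cdot x$; $\mathcal{W}_g(u)=\sum_{x\in\mathbb{V}_n}(-1)^{g(x)\oplus u\cdot x}$. For odd $n$, $g$ is semi-bent if $\mathcal{W}_g(u)\in\{0,\pm2^{\frac{n+1}{2}}\}$ for all $u$. *)

(* Defs.v *)
From mathcomp Require Import all_boot all_order all_algebra.
Set Implicit Arguments. Unset Strict Implicit. Unset Printing Implicit Defensive.
Import GRing.Theory Num.Theory.
Local Open Scope ring_scope.

Definition V (n : nat) := {ffun 'I_n -> bool}.

Definition dot (n : nat) (u x : V n) : bool :=
  \big[xorb/false]_(i < n) (u i && x i).

Definition walsh (n : nat) (g : V n -> bool) (u : V n) : int :=
  \sum_(x : V n) (-1) ^+ (g x (+) dot u x).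

Definition semibent (n : nat) (g : V n -> bool) : Prop :=
  forall u : V n, walsh g u \in [:: 0; 2 ^+ (n.+1)./2; - 2 ^+ (n.+1)./2].

(* Main.v *)
Require Import Defs.
From mathcomp Require Import all_boot all_order all_algebra.
Import GRing.Theory Num.Theory.
Local Open Scope ring_scope.

Lemma key (a b c d : bool) :
  2 * (-1) ^+ (((a && b) (+) (a && c) (+) (b && c)) (+) d) =
  (-1) ^+ (a (+) d) + (-1) ^+ (b (+) d) + (-1) ^+ (c (+) d) - (-1) ^+ (a (+) b (+) c (+) d) :> int.
Proof. by case: a; case: b; case: c; case: d. Qed.
Lemma pure (e0 e1 e2 e3 : int) : e0 \in [:: 0; 1; -1] -> e1 \in [:: 0; 1; -1] ->
  e2 \in [:: 0; 1; -1] -> e3 \in [:: 0; 1; -1] ->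
  (e0 + e1 + e2 - e3 \in [:: 0; 2; -2]) =
  (~~ odd ((e0 == 0) + ((e1 == 0) + ((e2 == 0) + ((e3 == 0) + 0))))%N &&
   ((e0 != 0) && ((e1 != 0) && ((e2 != 0) && ((e3 != 0) && true))) ==>
   ((e0 * e1 == e2 * e3) || (((e0 == 1) + ((e1 == 1) + ((e2 == 1) + ((e3 == 1) + 0))))%N \in [:: 1%N; 3%N]) && ~~ ((e0 == e1) && (e1 == e2))))).
Proof.
rewrite !inE => /or3P[]/eqP-> /or3P[]/eqP-> /or3P[]/eqP-> /or3P[]/eqP-> //.
Qed.

Lemma walsh_maj n (g0 g1 g2 g3 : V n -> bool) u :
  (forall x, g3 x = g0 x (+) g1 x (+) g2 x) ->
  2 * walsh (fun x => (g0 x && g1 x) (+) (g0 x && g2 x) (+) (g1 x && g2 x)) u =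
  walsh g0 u + walsh g1 u + walsh g2 u - walsh g3 u.
Proof.
move=> h3; rewrite /walsh mulr_sumr -!big_split /= -sumrB.
by apply: eq_bigr => x _; rewrite h3 key.
Qed.

Lemma memc (c w : int) : w \in [:: 0; c; - c] -> exists2 e : int, e \in [:: 0; 1; -1] & w = c * e.
Proof.
rewrite !inE => /or3P[]/eqP->.
- by exists 0; rewrite ?mulr0.
- by exists 1; rewrite ?mulr1.
- by exists (-1); rewrite ?mulrN1.
Qed.

Lemma pt (c wf w0 w1 w2 w3 : int) : c != 0 ->
  w0 \in [:: 0; c; - c] -> w1 \in [:: 0; c; - c] ->
  w2 \in [:: 0; c; - c] -> w3 \in [:: 0; c; - c] ->
  2 * wf = w0 + w1 + w2 - w3 ->
  (wf \in [:: 0; c; - c] <->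
     let W := [:: w0; w1; w2; w3] in
     ~~ odd (count (fun w => w == 0) W) /\
     (all (fun w => w != 0) W ->
        w0 * w1 = w2 * w3 \/
        ((count (fun w => w == c) W \in [:: 1%N; 3%N]) /\
         ~ (w0 = w1 /\ w1 = w2)))).
Proof.
move=> c0 /memc[e0 h0 ->] /memc[e1 h1 ->] /memc[e2 h2 ->] /memc[e3 h3 ->] E.
have two : (2 : int) != 0 by [].
have cc0 : c * c != 0 by rewrite mulf_neq0.
have -> : (wf \in [:: 0; c; - c]) = (e0 + e1 + e2 - e3 \in [:: 0; 2; -2]).
  rewrite !inE -[wf == _](inj_eq (mulfI two)) -[wf == c](inj_eq (mulfI two)) -[wf == - c](inj_eq (mulfI two)) E -!mulrDr -mulrBr.
  rewrite -[X in _ == X](mulr0 c) (inj_eq (mulfI c0)) [2 * c]mulrC (inj_eq (mulfI c0)).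
  by rewrite mulrN [2 * c]mulrC -mulrN (inj_eq (mulfI c0)).
rewrite (@pure _ _ _ _ h0 h1 h2 h3) /=.
have z : forall e, (c * e == 0) = (e == 0) by move=> e; rewrite mulf_eq0 (negbTE c0).
have o : forall e, (c * e == c) = (e == 1)
  by move=> e; rewrite -[X in _ == X](mulr1 c) (inj_eq (mulfI c0)).
have L2 : forall a b, (c * c * a = c * c * b) <-> (a = b) by move=> a b; split => [/(mulfI cc0)|->].
have L3 : forall a b, (c * a = c * b) <-> (a = b) by move=> a b; split => [/(mulfI c0)|->].
have L1 : (c * e0 * (c * e1) = c * e2 * (c * e3)) <-> (e0 * e1 = e2 * e3).
  by rewrite mulrACA [c * e2 * _]mulrACA; exact: (L2 (e0*e1) (e2*e3)).
rewrite !z !o.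
split.
- case/andP => ho hi; split => // ha.
  have := implyP hi ha => /orP[/eqP P|/andP[P Q]]; [left|right].
    exact/L1.
  split => // -[/L3 A /L3 B]; move: Q; by rewrite A B eqxx.
- case=> ho hi; apply/andP; split => //; apply/implyP => ha.
  case: (hi ha) => [/L1 P|[P Q]]; apply/orP; [left; exact/eqP|right].
  rewrite P /=; apply/negP => /andP[/eqP A /eqP B]; apply: Q; by rewrite A B.
Qed.

Theorem proposition4 (n : nat) (g0 g1 g2 g3 : V n -> bool) :
  odd n ->
  semibent g0 -> semibent g1 -> semibent g2 -> semibent g3 ->
  (forall x : V n, g0 x (+) g1 x (+) g2 x (+) g3 x = false) ->
  (semibent (fun x => (g0 x && g1 x) (+) (g0 x && g2 x) (+) (g1 x && g2 x)) <->
   forall u : V n,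
     let W := [:: walsh g0 u; walsh g1 u; walsh g2 u; walsh g3 u] in
     ~~ odd (count (fun w => w == 0) W) /\
     (all (fun w => w != 0) W ->
        walsh g0 u * walsh g1 u = walsh g2 u * walsh g3 u \/
        ((count (fun w => w == 2 ^+ (n.+1)./2) W \in [:: 1%N; 3%N]) /\
         ~ (walsh g0 u = walsh g1 u /\ walsh g1 u = walsh g2 u)))).
Proof.
move=> _ s0 s1 s2 s3 h.
have h3 : forall x, g3 x = g0 x (+) g1 x (+) g2 x.
  by move=> x; move: (h x); case: (g0 x); case: (g1 x); case: (g2 x); case: (g3 x).
have c0 : (2 ^+ (n.+1)./2 : int) != 0 by rewrite expf_neq0.
split.
- move=> hf u; exact: ((@pt _ _ _ _ _ _ c0 (s0 u) (s1 u) (s2 u) (s3 u) (@walsh_maj _ _ _ _ _ u h3)).1 (hf u)).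
- move=> hr u; exact: ((@pt _ _ _ _ _ _ c0 (s0 u) (s1 u) (s2 u) (s3 u) (@walsh_maj _ _ _ _ _ u h3)).2 (hr u)).
Qed.
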